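(* Let $Y\subset\mathbb C^n$ be a $k$-dimensional subspace and $a\in(\mathbb C^\times)^n$, and assume that for every $j$, $Y\not\subset\{q_j=0\}$ and $Y^\perp\not\subset\{p_j=0\}$. Let $I\subset\{1,\dots,n\}$ be a $k$-element subset with complement $\bar I$ such that the functions $q_I=\{q_i:i\in I\}$ form a coordinate system on $Y$. Then the functions $q_I$ and $p_{\bar I}=\{p_j:j\in\bar I\}$ form a coordinate system on $L_{Y,a}$.
   Context: $\mathbb C^n$ has coordinates $q_1,\dots,q_n$, the dual space $(\mathbb C^n)^*$ has dual coordinates $p_1,\dots,p_n$. $Y^\perp\subset(\mathbb C^n)^*$ is the annihilator of $Y$. The map $r_a(q,p)=(q_1+a_1/p_1,\dots,q_n+a_n/p_n,p_1,\dots,p_n)$ is defined where all $p_j\ne0$, and $L_{Y,a}=r_a(Y\times Y^\perp)\subset\mathbb C^n\times(\mathbb C^n)^*$ (image of the points of $Y\times Y^\perp$ with all $p_j\ne0$); it is the smooth variety in $\mathbb C^n\times\{\prod_jp_j\ne0\}$ given by $\sum_j\alpha_jp_j=0$ ($\alpha\in Y$) and $\sum_j\beta_j(q_j-a_j/p_j)=0$ ($\beta\in Y^\perp$). *)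

(* Defs.v *)
(* The field C is modelled as R[i]
   (complex numbers over an arbitrary realType R, i.e. R[i] is C). *)
From HB Require Import structures.
From mathcomp Require Import all_boot all_order all_algebra.
From mathcomp Require Import all_classical all_reals all_analysis.
From mathcomp Require Import complex.
Import Order.TTheory GRing.Theory Num.Theory.
Import numFieldNormedType.Exports.
Set Implicit Arguments. Unset Strict Implicit. Unset Printing Implicit Defensive.
Local Open Scope ring_scope.
Local Open Scope classical_set_scope.

(* C^n as row vectors, with its canonical normed-module structure over C
   (hence its usual topology and complex differentiability). *)
Definition Cn (R : realType) (n : nat) := ('rV[R[i]]_n : normedModType R[i]).

(* the pairing between (C^n)^* (coordinates p) and C^n (coordinates q) *)
Definition pairing (R : realType) (n : nat) (p q : Cn R n) : R[i] :=
  \sum_(j < n) p 0 j * q 0 j.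

(* Y is the row space of the matrix Y; membership in Y *)
Definition inY (R : realType) (n : nat) (Y : 'M[R[i]]_n) (y : Cn R n) : Prop :=
  (y <= Y)%MS.

Definition inYperp (R : realType) (n : nat) (Y : 'M[R[i]]_n) (p : Cn R n) : Prop :=
  forall y : Cn R n, inY Y y -> pairing p y = 0.

Definition r_map (R : realType) (n : nat) (a : Cn R n) (x : Cn R n * Cn R n)
  : Cn R n * Cn R n :=
  ((\row_j (x.1 0 j + a 0 j / x.2 0 j) : Cn R n), x.2).

Definition L_Ya (R : realType) (n : nat) (Y : 'M[R[i]]_n) (a : Cn R n)
  : set (Cn R n * Cn R n) :=
  [set x | exists q p : Cn R n,
      [/\ inY Y q, inYperp Y p, (forall j, p 0 j != 0) & x = r_map a (q, p)]].

(* The linear functions q_I form a coordinate system on the linear subspace Y: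
   y |-> (y_i)_{i in I} is a bijection from Y onto C^I
   (a value in C^I is represented by a row vector, coordinates outside I ignored). *)
Definition lin_coord_system (R : realType) (n : nat) (Y : 'M[R[i]]_n)
  (I : {set 'I_n}) : Prop :=
  (forall y1 y2 : Cn R n, inY Y y1 -> inY Y y2 ->
     (forall i, i \in I -> y1 0 i = y2 0 i) -> y1 = y2) /\
  (forall c : Cn R n, exists y : Cn R n, inY Y y /\ (forall i, i \in I -> y 0 i = c 0 i)).

Definition qI_pIbar (R : realType) (n : nat) (I : {set 'I_n})
  (x : Cn R n * Cn R n) : Cn R n :=
  \row_j (if j \in I then x.1 0 j else x.2 0 j).

(* n (holomorphic, here polynomial) functions phi form a (global) coordinate
   system on the n-dimensional complex submanifold S of C^n x (C^n)^*:
   phi restricts to a biholomorphism from S onto an open subset U of C^n,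
   i.e. phi is a bijection S -> U whose inverse is holomorphic on U. *)
Definition coord_system (R : realType) (n : nat) (S : set (Cn R n * Cn R n))
  (phi : Cn R n * Cn R n -> Cn R n) : Prop :=
  exists (U : set (Cn R n)) (psi1 psi2 : Cn R n -> Cn R n),
    [/\ open U,
        (forall x, S x -> U (phi x) /\ (psi1 (phi x), psi2 (phi x)) = x),
        (forall u, U u -> S (psi1 u, psi2 u) /\ phi (psi1 u, psi2 u) = u)
      & (forall u, U u -> differentiable psi1 u /\ differentiable psi2 u)].

(* Main.v *)
Require Import Defs.
From HB Require Import structures.
From mathcomp Require Import all_boot all_order all_algebra.
From mathcomp Require Import all_classical all_reals all_analysis.
From mathcomp Require Import complex.
Import Order.TTheory GRing.Theory Num.Theory.
Import numFieldNormedType.Exports.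
Local Open Scope ring_scope.
Local Open Scope classical_set_scope.

Section Aux.
Variable R : realType.
Local Notation C := (R[i]^o).

Lemma open_nz : open [set z : (C : numFieldType) | z != 0].
Proof.
have -> : [set z : (C : numFieldType) | z != 0] = ~` [set 0].
  by apply/seteqP; split => z /=; [move/eqP|move=> h; apply/eqP].
rewrite openC; apply: accessible_closed_set1; apply: hausdorff_accessible.
exact: norm_hausdorff.
Qed.

Variable n : nat.
Local Notation V := (Cn R n).

Lemma diff_row (g : V -> V) x :
  (forall j, differentiable (fun u => g u 0 j) x) -> differentiable g x.
Proof.
move=> h.
have -> : g = \sum_(j < n) (fun u => g u 0 j *: (delta_mx 0 j : V)).
  rewrite fct_sumE; apply/funext => u; exact: row_sum_delta.
apply: differentiable_sum => j; exact: differentiableZl.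
Qed.

End Aux.
Section T.
Variable R : realType.
Variable n : nat.
Local Notation C := (R[i]^o).
Local Notation V := (Cn R n).
Lemma diff_sumP (P : pred 'I_n) (F : 'I_n -> V -> C) x :
  (forall i, differentiable (F i) x) ->
  differentiable (fun u => \sum_(i < n | P i) F i u) x.
Proof.
move=> h. Timeout 20 rewrite -fct_sumE.
Timeout 20 elim/big_ind: _.
- Timeout 20 exact: differentiable_cst.
- Timeout 20 by move=> f g; apply: differentiableD.
- Timeout 20 by [].
Qed.
Lemma diff_prod (F : 'I_n -> V -> C) x :
  (forall i, differentiable (F i) x) ->
  differentiable (fun u => \prod_(i < n) F i u) x.
Proof.
move=> h.
Timeout 20 rewrite -fct_prodE.
Timeout 20 elim/big_ind: _.
- Timeout 20 exact: differentiable_cst.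
- Timeout 20 by move=> f g; apply: differentiableM.
- Timeout 20 by [].
Qed.

Lemma dM (f g : V -> C) x : differentiable f x -> differentiable g x ->
  differentiable (fun v => f v * g v) x.
Proof. Timeout 20 exact: differentiableM. Qed.
Lemma dB (f g : V -> C) x : differentiable f x -> differentiable g x ->
  differentiable (fun v => f v - g v) x.
Proof. Timeout 20 exact: differentiableB. Qed.
Lemma dD (f g : V -> C) x : differentiable f x -> differentiable g x ->
  differentiable (fun v => f v + g v) x.
Proof. Timeout 20 exact: differentiableD. Qed.
Lemma dN (f : V -> C) x : differentiable f x ->
  differentiable (fun v => - f v) x.
Proof. Timeout 20 exact: differentiableN. Qed.
Lemma dV (f : V -> C) x : differentiable f x -> f x != 0 ->
  differentiable (fun v => (f v)^-1) x.
Proof. Timeout 20 exact: differentiableV. Qed.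
Lemma dc (c : C) (x : V) : differentiable (fun _ : V => c) x.
Proof. Timeout 20 exact: differentiable_cst. Qed.
Lemma dco j (x : V) : differentiable (fun v : V => (v 0 j : C)) x.
Proof. Timeout 20 exact: differentiable_coord. Qed.
Lemma dcont (f : V -> C) x : differentiable f x -> {for x, continuous f}.
Proof. Timeout 20 exact: differentiable_continuous. Qed.

End T.

Definition Pm (R : realType) (n : nat) (I : {set 'I_n}) (Yv : 'I_n -> Cn R n)
  (u : Cn R n) : Cn R n :=
  \row_j (if j \in I then - \sum_(l < n | l \notin I) u 0 l * Yv j 0 l else u 0 j).

Definition Qm (R : realType) (n : nat) (I : {set 'I_n}) (Yv : 'I_n -> Cn R n)
  (a u : Cn R n) : Cn R n :=
  \sum_(i in I) (u 0 i - a 0 i / @Pm R n I Yv u 0 i) *: Yv i.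

Arguments Pm {R n}.
Arguments Qm {R n}.

Section Alg.
Variables (R : realType) (n : nat) (I : {set 'I_n}) (Yv : 'I_n -> Cn R n).
Hypothesis HYv : forall i j, j \in I -> Yv i 0 j = (j == i)%:R.

Lemma coord_sum (c : 'I_n -> R[i]) j : j \in I ->
  (\sum_(i in I) c i *: Yv i) 0 j = c j.
Proof.
move=> jI; rewrite summxE (bigD1 j) //= mxE HYv // eqxx mulr1 big1 ?addr0 //.
by move=> i /andP[_ ij]; rewrite mxE HYv // eq_sym (negbTE ij) mulr0.
Qed.

Lemma pair_Yv (p : Cn R n) i : i \in I ->
  pairing p (Yv i) = p 0 i + \sum_(l < n | l \notin I) p 0 l * Yv i 0 l.
Proof.
move=> iI; rewrite /pairing (bigID (fun l => l \in I)) /=; congr (_ + _).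
rewrite (bigD1 i) //= HYv // eqxx mulr1 big1 ?addr0 //.
by move=> l /andP[lI li]; rewrite HYv // (negbTE li) mulr0.
Qed.

Lemma pair_sum (p : Cn R n) (c : 'I_n -> R[i]) :
  pairing p (\sum_(i in I) c i *: Yv i) = \sum_(i in I) c i * pairing p (Yv i).
Proof.
rewrite /pairing.
under eq_bigr => j _ do rewrite summxE big_distrr /=.
rewrite exchange_big /=; apply: eq_bigr => i _.
rewrite big_distrr /=; apply: eq_bigr => j _.
by rewrite mxE mulrCA.
Qed.

Lemma dPm j (x : Cn R n) : differentiable (fun u : Cn R n => (Pm I Yv u 0 j : R[i]^o)) x.
Proof.
have -> : (fun u : Cn R n => (Pm I Yv u 0 j : R[i]^o)) =
  (fun u => if j \in I then - \sum_(l < n | l \notin I) u 0 l * Yv j 0 l else u 0 j).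
  by apply/funext => u; rewrite mxE.
case: (j \in I); last exact: dco.
apply: dN; apply: diff_sumP => l; apply: dM; [exact: dco | exact: dc].
Qed.
End Alg.
Arguments coord_sum {R n I Yv}.
Arguments pair_Yv {R n I Yv}.
Arguments pair_sum {R n I Yv}.
Arguments dPm {R n I Yv}.

Theorem lemma4p2 (R : realType) (n k : nat) (Y : 'M[R[i]]_n) (a : Cn R n)
  (I : {set 'I_n}) :
  \rank Y = k ->
  (forall j : 'I_n, a 0 j != 0) ->
  (forall j : 'I_n, exists y : Cn R n, inY Y y /\ y 0 j != 0) ->
  (forall j : 'I_n, exists p : Cn R n, inYperp Y p /\ p 0 j != 0) ->
  #|I| = k ->
  lin_coord_system Y I ->
  coord_system (L_Ya Y a) (qI_pIbar I).
Proof.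
move=> _ _ _ _ _ [inj sur].
have [Lf HL] := choice sur.
pose Yv i := Lf (delta_mx 0 i).
have HYvY i : inY Y (Yv i) := (HL _).1.
have HYv i j : j \in I -> Yv i 0 j = (j == i)%:R.
  by move=> jI; rewrite /Yv (HL _).2 // mxE eqxx.
have sumY (c : 'I_n -> R[i]) : inY Y (\sum_(i in I) c i *: Yv i).
  by rewrite /inY; apply: summx_sub => i _; apply: scalemx_sub; exact: HYvY.
have span y : inY Y y -> y = \sum_(i in I) y 0 i *: Yv i.
  move=> yY; apply: inj => // j jI; by rewrite (coord_sum HYv).
have perpA p : inYperp Y p -> forall i, i \in I ->
    p 0 i = - \sum_(l < n | l \notin I) p 0 l * Yv i 0 l.
  move=> hp i iI; have := hp _ (HYvY i); rewrite (pair_Yv HYv) // => /eqP.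
  by rewrite addr_eq0 => /eqP.
have Pout u j : j \notin I -> Pm I Yv u 0 j = u 0 j.
  by move=> jI; rewrite mxE (negbTE jI).
have perpB u : inYperp Y (Pm I Yv u).
  move=> y yY; rewrite (span y yY) pair_sum big1 // => i iI.
  rewrite (pair_Yv HYv) // mxE iI.
  have -> : \sum_(l < n | l \notin I) Pm I Yv u 0 l * Yv i 0 l =
    \sum_(l < n | l \notin I) u 0 l * Yv i 0 l.
    by apply: eq_bigr => l lI; rewrite Pout.
  by rewrite addNr mulr0.
exists [set u | forall j, Pm I Yv u 0 j != 0],
  (fun u => (r_map a (Qm I Yv a u, Pm I Yv u)).1),
  (fun u => (r_map a (Qm I Yv a u, Pm I Yv u)).2).
split.
- have -> : [set u | forall j, Pm I Yv u 0 j != 0] =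
     (fun u => (\prod_(j < n) Pm I Yv u 0 j : R[i]^o)) @^-1` [set z | z != 0].
    apply/seteqP; split => u /=.
      by move=> h; apply/prodf_neq0 => j _; exact: h.
    by move/prodf_neq0 => h j; exact: h.
  apply: open_comp; last exact: open_nz.
  move=> u _; apply: dcont; apply: diff_prod => j; exact: dPm.
- move=> x [q [p [qY pY pnz ->]]].
  have EP : Pm I Yv (qI_pIbar I (r_map a (q, p))) = p.
    apply/rowP => j; rewrite mxE; case: ifP => jI.
      rewrite (perpA p pY j jI); congr (- _); apply: eq_bigr => l lI.
      by rewrite !mxE (negbTE lI).
    by rewrite !mxE jI.
  have EQ : Qm I Yv a (qI_pIbar I (r_map a (q, p))) = q.
    rewrite /Qm EP [RHS](span q qY); apply: eq_bigr => i iI.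
    by rewrite !mxE iI /= addrK.
  cbv beta; rewrite EQ EP; split; first by move=> j; rewrite EP.
  by case: (r_map a (q, p)).
- move=> u Uu; split.
    exists (Qm I Yv a u), (Pm I Yv u); split => //; first exact: sumY.
  apply/rowP => j; rewrite mxE; case: ifP => jI; last by rewrite /= Pout ?jI.
  rewrite /= mxE /Qm (coord_sum HYv) // subrK //.
- move=> u Uu; split; apply: diff_row => j; last exact: dPm.
  have -> : (fun v : Cn R n => (r_map a (Qm I Yv a v, Pm I Yv v)).1 0 j) =
    (fun v => \sum_(i < n | i \in I) (v 0 i - a 0 i * (Pm I Yv v 0 i)^-1) * Yv i 0 j
              + a 0 j * (Pm I Yv v 0 j)^-1).
    apply/funext => v; rewrite mxE /Qm summxE; congr (_ + _).
    by apply: eq_bigr => i _; rewrite mxE.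
  apply: dD.
    apply: diff_sumP => i; apply: dM; last exact: dc.
    apply: dB; first exact: dco.
    apply: dM; first exact: dc.
    apply: dV; [exact: dPm | exact: Uu].
  apply: dM; first exact: dc.
  apply: dV; [exact: dPm | exact: Uu].
Qed.
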